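(* Let $n,d,a$ be positive integers and $p$ a prime. Suppose that every point $Q\in\mathcal{V}_d\subseteq\mathbb{C}^n$ with $\mathcal{P}_1(Q)=0$ is $p$-symmetric. Let $g:=\gcd(d,n)$ and assume $p\mid g$. Then $(n,d,a)$ is bad if and only if $g\nmid a$.
   Context: $\mathcal{V}_d=\{(z_1,\dots,z_n)\in\mathbb{C}^n: z_i^d=1\ \forall i,\ z_n=1\}$ and $\mathcal{P}_1=x_1+\dots+x_n$. A point $Q=(z_1,\dots,z_n)$ whose coordinates are $d$-th roots of unity is $v$-symmetric if, for a primitive $v$-th root of unity $\epsilon$, there is a permutation $\tau\in\mathfrak{S}_n$ with $(\epsilon z_1,\dots,\epsilon z_n)=(z_{\tau(1)},\dots,z_{\tau(n)})$. Let $R=\mathbb{C}[x_1,\dots,x_n]$, and $R_a^{\mathfrak{S}_n}$ the symmetric polynomials homogeneous of degree $a$. A triple $(n,d,a)$ is good if there exists $f\in R_a^{\mathfrak{S}_n}$ such that $x_1^d-x_n^d,\dots,x_{n-1}^d-x_n^d,f$ is a regular sequence (equivalently, $f$ has no zero on $\mathcal{V}_d$); otherwise it is bad. *)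

(* Defs.v *)
From mathcomp Require Import all_boot all_algebra all_fingroup.
From mathcomp Require Import Rstruct.
From mathcomp.real_closed Require Import complex.
From mathcomp Require Import mpoly.

Set Implicit Arguments.
Unset Strict Implicit.
Unset Printing Implicit Defensive.

Import GRing.Theory.
Local Open Scope ring_scope.

Definition C : numClosedFieldType := complex Rdefinitions.R.

(* V_d = { z in C^n : z_i^d = 1 for all i, z_n = 1 } (z_n = last coordinate,
   index n-1 in 'I_n). *)
Definition in_Vd (n d : nat) (z : 'I_n -> C) : Prop :=
  (forall i : 'I_n, z i ^+ d = 1) /\
  (forall i : 'I_n, nat_of_ord i = n.-1 -> z i = 1).

Definition P1 (n : nat) (z : 'I_n -> C) : C := \sum_(i < n) z i.

Definition v_symmetric (n v : nat) (z : 'I_n -> C) : Prop :=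
  exists eps : C, v.-primitive_root eps /\
    exists tau : 'S_n, forall i : 'I_n, eps * z i = z (tau i).

(* (n,d,a) is good: some symmetric f homogeneous of degree a has no zero on
   V_d (the characterization of goodness given in the paper's definition). *)
Definition good (n d k : nat) : Prop :=
  exists f : {mpoly C[n]},
    [/\ f \is symmetric, f \is k.-homog &
        forall z : 'I_n -> C, in_Vd d z -> f.@[z] != 0].

Definition bad (n d a : nat) : Prop := ~ good n d a.

(* Main.v *)
Require Import Defs.
From mathcomp Require Import all_boot all_algebra all_fingroup all_solvable all_field.
From mathcomp Require Import mpoly.
From Stdlib Require Import Classical_Prop.
Set Implicit Arguments.
Unset Strict Implicit.
Unset Printing Implicit Defensive.
Import GRing.Theory.
Local Open Scope ring_scope.

Lemma meval_msym n (v : 'I_n -> C) (s : 'S_n) (q : {mpoly C[n]}) :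
  (msym s q).@[v] = q.@[fun i => v (s i)].
Proof.
rewrite /msym /mmap raddf_sum mevalE /=; apply: eq_bigr => m _.
rewrite mevalM mevalC; apply: congr1.
rewrite /mmap1 rmorph_prod; apply: eq_bigr => i _.
by rewrite rmorphXn /= mevalXU.
Qed.

Lemma sym_eval n (v : 'I_n -> C) (s : 'S_n) (q : {mpoly C[n]}) :
  q \is symmetric -> q.@[fun i => v (s i)] = q.@[v].
Proof. by move=> /issymP H; rewrite -meval_msym H. Qed.

Lemma homog_eval n (v : 'I_n -> C) (c : C) (k : nat) (q : {mpoly C[n]}) :
  q \is k.-homog -> q.@[fun i => c * v i] = c ^+ k * q.@[v].
Proof.
move=> /dhomogP H; rewrite !mevalE big_distrr /= !big_seq; apply: eq_bigr => m Hm.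
rewrite mulrCA; apply: congr1.
have -> : k = (\sum_i m i)%N by rewrite -(H m Hm); exact: mdegE.
rewrite -prodrXr -big_split /=.
by apply: eq_bigr => i _; rewrite exprMn.
Qed.

Definition psum n k : {mpoly C[n]} := \sum_(i < n) 'X_i ^+ k.

Lemma psum_eval n k (v : 'I_n -> C) : (psum n k).@[v] = \sum_(i < n) v i ^+ k.
Proof.
rewrite /psum rmorph_sum; apply: eq_bigr => i _.
by rewrite rmorphXn /= mevalXU.
Qed.

Lemma msymXU n (s : 'S_n) (i : 'I_n) : msym s ('X_i : {mpoly C[n]}) = 'X_(s i).
Proof. by rewrite /msym mmapX mmap1U. Qed.

Lemma psum_sym n k : psum n k \is symmetric.
Proof.
apply/issymP => s; rewrite /psum rmorph_sum.
rewrite [RHS](reindex_inj (@perm_inj _ s)); apply: eq_bigr => i _.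
by rewrite rmorphXn /= msymXU.
Qed.

Lemma psum_homog n k : psum n k \is k.-homog.
Proof.
rewrite /psum; apply: rpred_sum => i _.
have h1 : ('X_i : {mpoly C[n]}) \is 1.-homog by rewrite dhomogX; apply/eqP; exact: mdeg1.
by have := dhomogMn k h1; rewrite mul1n.
Qed.

Import order.Order.TTheory Num.Theory.

Lemma C_prim_exists m : (m > 0)%N -> exists z : C, m.-primitive_root z.
Proof.
pose q : {poly C} := 'X^m - 1; have [r Dp] := closed_field_poly_normal q.
move=> m_gt0; rewrite (monicP _) ?monicXnsubC // scale1r in Dp.
have rn1: all m.-unity_root r by apply/allP=> z; rewrite -root_prod_XsubC -Dp.
have sz_r: (m < (size r).+1)%N.
  by rewrite -(size_prod_XsubC r id) -Dp size_XnsubC.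
have [|z] := hasP (has_prim_root m_gt0 rn1 _ sz_r); last by exists z.
by rewrite -separable_prod_XsubC -Dp separable_Xn_sub_1 // pnatr_eq0 -lt0n.
Qed.

Lemma bound_seq (s : seq C) : exists M : C, 0 <= M /\ forall x, x \in s -> `|x| <= M.
Proof.
elim: s => [|x s [M [M0 HM]]]; first by exists 0; split.
exists (M + `|x|); split; first by rewrite addr_ge0.
move=> y; rewrite inE => /orP [/eqP ->|ys]; first by rewrite lerDr.
by apply: le_trans (HM y ys) _; rewrite lerDl.
Qed.

Lemma avoid_seq (s : seq C) : exists t : C, t \notin s.
Proof.
have [M [M0 HM]] := bound_seq s; exists (M + 1); apply/negP => /HM.
by rewrite ger0_norm ?addr_ge0 // ?ler01 // gerDl ler10.
Qed.

Lemma combine n k (K : finType) (phi : K -> 'I_n -> C) (Q : K -> Prop) :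
  (forall x, Q x -> exists f : {mpoly C[n]},
      [/\ f \is symmetric, f \is k.-homog & f.@[phi x] != 0]) ->
  exists f : {mpoly C[n]}, [/\ f \is symmetric, f \is k.-homog &
      forall x, Q x -> f.@[phi x] != 0].
Proof.
move=> H.
suff [f [Hs Hh Hv]] : exists f : {mpoly C[n]}, [/\ f \is symmetric, f \is k.-homog &
      forall x, x \in enum K -> Q x -> f.@[phi x] != 0].
  by exists f; split => // x; apply: Hv; rewrite mem_enum.
elim: (enum K) => [|x s [F [Fs Fh Fv]]].
  by exists 0; split; rewrite ?rpred0.
have [Qx|nQx] := classic (Q x); last first.
  exists F; split => // y; rewrite inE => /orP [/eqP ->|ys]; last exact: Fv.
  by move=> Qy; case: nQx.
have [g [gs gh gv]] := H x Qx.
have [t Ht] := avoid_seq [seq - F.@[phi y] / g.@[phi y] | y <- x :: s].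
exists (F + t *: g); split; rewrite ?rpredD ?rpredZ //.
move=> y yxs Qy; rewrite mevalD mevalZ.
have [g0|gn0] := eqVneq (g.@[phi y]) 0.
  rewrite g0 mulr0 addr0; apply: Fv => //.
  move: yxs; rewrite inE => /orP [/eqP yx|//].
  by move: gv; rewrite -yx g0 eqxx.
apply/negP => /eqP Hz; case/negP: Ht; apply/mapP; exists y => //.
move/eqP: Hz; rewrite addr_eq0 => /eqP ->; by rewrite opprK mulfK.
Qed.

Definition cnt n (z : 'I_n -> C) (v : C) : nat := (\sum_(i < n) (z i == v))%N.

Lemma count_cnt n (F : 'I_n -> C) w :
  count_mem w [seq F i | i <- enum 'I_n] = cnt F w.
Proof.
rewrite count_map -sum1_count big_enum_cond /= big_mkcond /=.
by apply: eq_bigr => i _; case: eqP.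
Qed.

Lemma cnt_sym n (z : 'I_n -> C) (e : C) (s : 'S_n) :
  e != 0 -> (forall i, e * z i = z (s i)) -> forall v, cnt z (e * v) = cnt z v.
Proof.
move=> e0 H v; rewrite /cnt [LHS](reindex_inj (@perm_inj _ s)) /=.
by apply: eq_bigr => i _; rewrite -H (inj_eq (mulfI e0)).
Qed.

Lemma cnt_symX n (z : 'I_n -> C) (e : C) (s : 'S_n) :
  e != 0 -> (forall i, e * z i = z (s i)) -> forall k v, cnt z (e ^+ k * v) = cnt z v.
Proof.
move=> e0 H; elim=> [|k IH] v; first by rewrite expr0 mul1r.
by rewrite exprS -mulrA (cnt_sym e0 H) IH.
Qed.

Lemma cnt_perm n (z : 'I_n -> C) (e : C) :
  e != 0 -> (forall v, cnt z (e * v) = cnt z v) ->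
  exists s : 'S_n, forall i, e * z i = z (s i).
Proof.
move=> e0 H.
have : perm_eq [seq e * z i | i <- enum 'I_n] [tuple z i | i < n].
  rewrite /perm_eq; apply/allP => w _; apply/eqP.
  have -> : [tuple z i | i < n] = [seq z i | i <- enum 'I_n] :> seq C.
    by [].
  rewrite !count_cnt /cnt.
  have -> : (\sum_(i < n) (z i == w) = cnt z (e * (w / e)))%N.
    by rewrite [e * _]mulrC divfK.
  rewrite H /cnt; apply: eq_bigr => i _.
  suff -> : (e * z i == w) = (z i == w / e) by [].
  apply/eqP/eqP => [<-|->].
    by rewrite [e * _]mulrC mulfK.
  by rewrite [e * _]mulrC divfK.
have -> : [seq e * z i | i <- enum 'I_n] = [tuple e * z i | i < n] :> seq C by [].
case/tuple_permP => s Hs; exists s => i.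
have := congr1 (fun l => nth 0 l i) Hs.
by rewrite -!tnth_nth !tnth_mktuple.
Qed.

Lemma fiber (p : nat) (eps u x : C) : p.-primitive_root eps -> u != 0 ->
  ((x ^+ p == u ^+ p) : nat) = (\sum_(k < p) (x == (eps ^+ k * u)%R))%N.
Proof.
move=> pe u0; have [H|H] := eqVneq (x ^+ p) (u ^+ p).
  have H1 : (x / u) ^+ p = 1 by rewrite exprMn exprVn H divff // expf_neq0.
  have [k0 Hk0] := prim_rootP pe H1.
  have xE : x = eps ^+ k0 * u by rewrite -Hk0 divfK.
  rewrite (bigD1 k0) //= big1 ?addn0; first by rewrite xE eqxx.
  move=> k kk0; rewrite xE (inj_eq (mulIf u0)) (eq_prim_root_expr pe).
  rewrite !modn_small ?ltn_ord //.
  by case: eqP => // e; case/eqP: kk0; apply: val_inj.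
rewrite big1 //= => k _; case: eqP => // xE; case/eqP: H; rewrite xE.
by rewrite exprMn -exprM mulnC exprM (prim_expr_order pe) expr1n mul1r.
Qed.

Lemma cnt_pw (p : nat) n (z : 'I_n -> C) (eps u : C) (s : 'S_n) :
  p.-primitive_root eps -> u != 0 -> (forall i, eps * z i = z (s i)) ->
  cnt (fun i => z i ^+ p) (u ^+ p) = (p * cnt z u)%N.
Proof.
move=> pe u0 H; rewrite /cnt.
rewrite (eq_bigr (fun i => \sum_(k < p) (z i == (eps ^+ k * u)%R))%N); last first.
  by move=> i _; rewrite (fiber _ pe u0).
rewrite exchange_big /=.
have e0 : eps != 0 by rewrite (prim_root_eq0 pe) -lt0n (prim_order_gt0 pe).
rewrite (eq_bigr (fun _ => cnt z u)); last by move=> k _; exact: (cnt_symX e0 H).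
by rewrite sum_nat_const card_ord.
Qed.

Lemma prim_lift (p J : nat) (e e' : C) : prime p -> e ^+ p = e' ->
  (p ^ J.+1).-primitive_root e' -> (p ^ J.+2).-primitive_root e.
Proof.
move=> pp He pe'.
have p0 : (0 < p)%N by exact: prime_gt0.
have N0 : (0 < p ^ J.+2)%N by rewrite expn_gt0 p0.
have H1 : e ^+ (p ^ J.+2) = 1.
  by rewrite (expnS p J.+1) exprM He (prim_expr_order pe').
have [m pm Hm] := prim_order_exists N0 H1.
have [k kle mE] := dvdn_pfactor _ _ pp Hm.
move: kle; rewrite leq_eqVlt => /orP [/eqP kE|kl]; first by rewrite -kE -mE.
have : (p ^ J.+1 %| p ^ J)%N.
  rewrite (prim_order_dvd pe') -He -exprM -expnS -(prim_order_dvd pm) mE.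
  by apply/dvdn_pfactor => //; exists k.
move=> /dvdn_leq; rewrite expn_gt0 p0 => /(_ isT); rewrite leq_exp2l ?prime_gt1 //. by rewrite ltnn.
Qed.

Lemma lift n (z : 'I_n -> C) (p J : nat) : prime p ->
  v_symmetric p z -> v_symmetric (p ^ J.+1) (fun i => z i ^+ p) ->
  v_symmetric (p ^ J.+2) z.
Proof.
move=> pp [eps [pe [tau Ht]]] [e' [pe' [s' Hs']]].
have p0 : (0 < p)%N by exact: prime_gt0.
pose e := p.-root e'.
have He : e ^+ p = e' by rewrite /e rootCK.
have pe2 := prim_lift pp He pe'.
have ne0 m (x : C) : m.-primitive_root x -> x != 0.
  by move=> px; rewrite (prim_root_eq0 px) -lt0n (prim_order_gt0 px).
have e0 := ne0 _ _ pe2; have e'0 := ne0 _ _ pe'; have eps0 := ne0 _ _ pe.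
exists e; split => //; apply: cnt_perm => // v.
have [->|v0] := eqVneq v 0; first by rewrite mulr0.
apply/eqP; rewrite -(eqn_pmul2l p0); apply/eqP.
rewrite -(cnt_pw pe (mulf_neq0 e0 v0) Ht) -(cnt_pw pe v0 Ht).
by rewrite exprMn He (cnt_sym e'0 Hs').
Qed.

Lemma Vd_pw n d m (z : 'I_n -> C) : in_Vd d z -> in_Vd d (fun i => z i ^+ m).
Proof.
move=> [H1 H2]; split => i; first by rewrite exprAC H1 expr1n.
by move=> hi; rewrite H2 // expr1n.
Qed.

Lemma Lsym n d p : prime p ->
  (forall z : 'I_n -> C, in_Vd d z -> P1 z = 0 -> v_symmetric p z) ->
  forall J (z : 'I_n -> C), in_Vd d z ->
  (forall j, (j <= J)%N -> P1 (fun i => z i ^+ (p ^ j)) = 0) ->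
  v_symmetric (p ^ J.+1) z.
Proof.
move=> pp Hyp; elim=> [|J IH] z Hz H.
  rewrite expn1; apply: Hyp => //; rewrite -(H 0%N) // /P1.
have Hz0 : v_symmetric p z.
  apply: Hyp => //; rewrite -(H 0%N) // /P1.
apply: lift => //; apply: IH; first exact: Vd_pw.
move=> j hj; rewrite -(H j.+1) // /P1.
by apply: eq_bigr => i _; rewrite -exprM -expnS.
Qed.

Lemma symdiv n d m (z : 'I_n -> C) : (0 < n)%N -> (0 < d)%N -> in_Vd d z ->
  v_symmetric m z -> (m %| n)%N /\ (m %| d)%N.
Proof.
move=> n0 d0 [Hd _] [e [pe [s Hs]]].
have z0 i : z i != 0.
  by apply/eqP => zi; move: (Hd i); rewrite zi expr0n gtn_eqF // => /eqP; rewrite eq_sym oner_eq0.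
split.
  rewrite (prim_order_dvd pe); apply/eqP.
  have : \prod_(i < n) (e * z i) = \prod_(i < n) z i.
    by rewrite [RHS](reindex_inj (@perm_inj _ s)); apply: eq_bigr => i _.
  rewrite big_split /=.
  have -> : \prod_(i < n) e = e ^+ n by rewrite prodr_const card_ord.
  have P0 : \prod_(i < n) z i != 0 by apply/prodf_neq0 => i _; exact: z0.
  move=> H; apply: (mulIf P0); by rewrite H mul1r.
rewrite (prim_order_dvd pe); apply/eqP.
pose i0 := Ordinal n0.
have := Hd (s i0); rewrite -Hs exprMn Hd mulr1 => ->.
by [].
Qed.

Lemma point n d b p : prime p -> (0 < n)%N -> (0 < d)%N -> (0 < b)%N ->
  (forall z : 'I_n -> C, in_Vd d z -> P1 z = 0 -> v_symmetric p z) ->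
  (gcdn d n %| b)%N ->
  forall z : 'I_n -> C, in_Vd d z -> exists f : {mpoly C[n]},
      [/\ f \is symmetric, f \is b.-homog & f.@[z] != 0].
Proof.
move=> pp n0 d0 a0 Hyp hg z Hz.
set J := logn p b.
have [/existsP [j Hj]|/existsPn Hn] :=
  boolP [exists j : 'I_J.+1, P1 (fun i => z i ^+ (p ^ j)) != 0]; last first.
  have Hs := Lsym pp Hyp Hz (fun j hj => eqP (negbNE (Hn (Ordinal (hj : (j < J.+1)%N))))).
  have [h1 h2] := symdiv n0 d0 Hz Hs.
  have : (p ^ J.+1 %| b)%N by apply: dvdn_trans hg; rewrite dvdn_gcd h1 h2.
  by rewrite pfactor_dvdn // ltnn.
have pj : (p ^ j %| b)%N by rewrite pfactor_dvdn // -ltnS.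
exists (psum n (p ^ j) ^+ (b %/ p ^ j)); split.
- by apply: rpredX; exact: psum_sym.
- by have := dhomogMn (b %/ p ^ j) (psum_homog n (p ^ j)); rewrite mulnC divnK.
- by rewrite rmorphXn /= psum_eval expf_neq0.
Qed.

Lemma good_dir n d b p : prime p -> (0 < n)%N -> (0 < d)%N -> (0 < b)%N ->
  (forall z : 'I_n -> C, in_Vd d z -> P1 z = 0 -> v_symmetric p z) ->
  (gcdn d n %| b)%N -> good n d b.
Proof.
move=> pp n0 d0 a0 Hyp hg.
have [zeta pz] := C_prim_exists d0.
pose phi (k : {ffun 'I_n -> 'I_d}) := fun i => zeta ^+ (k i).
have [f [fs fh fv]] := @combine n b _ phi (fun k => in_Vd d (phi k))
  (fun k hk => point pp n0 d0 a0 Hyp hg hk).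
exists f; split => // z Hz.
pose k := [ffun i => sval (prim_rootP pz (Hz.1 i))].
have -> : f.@[z] = f.@[phi k].
  apply: meval_eq => i; rewrite /phi /k ffunE.
  by case: (prim_rootP pz (Hz.1 i)).
apply: fv; split => i; first by rewrite /phi -exprM mulnC exprM (prim_expr_order pz) expr1n.
move=> hi; rewrite /phi /k ffunE; case: (prim_rootP pz (Hz.1 i)) => j /= <-.
exact: Hz.2.
Qed.

Lemma bad_dir n d b : (0 < n)%N -> (0 < d)%N ->
  ~~ (gcdn d n %| b)%N -> bad n d b.
Proof.
move=> n0 d0 ng [f [fs fh fv]].
set g := gcdn d n.
have g0 : (0 < g)%N by rewrite gcdn_gt0 d0.
have [zeta pz] := C_prim_exists g0.
pose z := fun i : 'I_n => zeta ^+ (i.+1).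
have zn : zeta ^+ n = 1 by apply/eqP; rewrite -(prim_order_dvd pz) dvdn_gcdr.
have zd : zeta ^+ d = 1 by apply/eqP; rewrite -(prim_order_dvd pz) dvdn_gcdl.
have Hz : in_Vd d z.
  split => i; first by rewrite /z -exprM mulnC exprM zd expr1n.
  by rewrite /z => ->; rewrite prednK.
pose tau := perm (@ordS_inj n).
have Ht i : zeta * z i = z (tau i).
  rewrite /z permE /= -exprS; apply: (@eqP C _ _); rewrite (eq_prim_root_expr pz).
  by rewrite -[((i.+1 %% n).+1)%N]addn1 -modnDml modn_dvdm ?dvdn_gcdr // modnDml addn1.
have E1 : f.@[fun i => zeta * z i] = f.@[fun i => z (tau i)] by apply: meval_eq.
have := homog_eval z zeta fh.
rewrite E1 sym_eval // => /eqP.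
rewrite -subr_eq0 -{1}[f.@[z]]mul1r -mulrBl mulf_eq0 (negbTE (fv z Hz)) orbF.
rewrite subr_eq0 eq_sym -(prim_order_dvd pz) => /negP.
by rewrite (negbTE ng).
Qed.

Theorem proposition3p19 (n d a p : nat) :
  (0 < n)%N -> (0 < d)%N -> (0 < a)%N -> prime p ->
  (forall z : 'I_n -> C, in_Vd d z -> P1 z = 0%R -> v_symmetric p z) ->
  (p %| gcdn d n)%N ->
  (bad n d a <-> ~~ (gcdn d n %| a)%N).
Proof.
move=> n0 d0 a0 pp Hyp _; split.
  by move=> Hb; apply/negP => hg; apply: Hb; exact: (good_dir pp n0 d0 a0 Hyp hg).
exact: bad_dir.
Qed.
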